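(* For every agent $i$, atomic terms $t,s,u$, $\theta\in\Theta_K=[0,1]\cap\mathbb{Q}$ and $\eta\in\Theta_V^+=(\tfrac12,1]\cap\mathbb{Q}$, the following formulas are valid (true at every world of every model): \[ K_i^1(t=s)\to\bigl(K_i^\theta(t=u)\leftrightarrow K_i^\theta(s=u)\bigr),\qquad K_i^1(t=s)\to\bigl(Kv_i^\eta(t)\leftrightarrow Kv_i^\eta(s)\bigr). \]
   Context: Fix a countable set $\mathsf{Prop}$ of propositional variables, a countable set $\mathsf{Term}$ of atomic terms, and a finite set of agents $\mathcal{A}=\{1,\dots,n\}$. Let $\Theta_K=[0,1]\cap\mathbb{Q}$ and $\Theta_V^+=(\frac12,1]\cap\mathbb{Q}$. Formulas are generated by $\varphi::= p\mid t=s\mid\neg\varphi\mid(\varphi\to\psi)\mid K_i^\theta\varphi\mid Kv_i^\eta(t)$ with $p\in\mathsf{Prop}$, $t,s\in\mathsf{Term}$, $i\in\mathcal{A}$, $\theta\in\Theta_K$, $\eta\in\Theta_V^+$; $\leftrightarrow$ is a standard abbreviation. A model is $M=(W,D,\{P_i\}_{i\in\mathcal{A}},V,\mathsf{val})$ with $W\neq\emptyset$, $D\neq\emptyset$, $P_i(w)$ a countably additive probability measure on the powerset of $W$ for each $i,w$, $V:W\times\mathsf{Prop}\to\{0,1\}$, $\mathsf{val}:W\times\mathsf{Term}\to D$. Write $\llbracket\varphi\rrbracket^M=\{u\mid M,u\models\varphi\}$ and $\llbracket t=d\rrbracket^M=\{u\mid \mathsf{val}(u,t)=d\}$. Satisfaction: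 $M,w\models p$ iff $V(w,p)=1$; $M,w\models t=s$ iff $\mathsf{val}(w,t)=\mathsf{val}(w,s)$; Boolean clauses as usual; $M,w\models K_i^\theta\varphi$ iff $P_i(w)(\llbracket\varphi\rrbracket^M)\ge\theta$; $M,w\models Kv_i^\eta(t)$ iff there exists a unique $d\in D$ with $P_i(w)(\llbracket t=d\rrbracket^M)\ge\eta$. *)

(* Defs.v *)
From Stdlib Require Import Reals QArith Qreals.
Open Scope R_scope.

Definition agent (n : nat) : Type := {i : nat | (1 <= i <= n)%nat}.

Definition prop_var : Type := nat.
Definition term : Type := nat.

Definition ThetaK : Type := {q : Q | (0 <= q <= 1)%Q}.
Definition ThetaVplus : Type := {q : Q | (1 # 2 < q)%Q /\ (q <= 1)%Q}.

Definition thK (q : ThetaK) : R := Q2R (proj1_sig q).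
Definition thV (q : ThetaVplus) : R := Q2R (proj1_sig q).

Inductive form (n : nat) : Type :=
| FProp : prop_var -> form n
| FEq : term -> term -> form n
| FNeg : form n -> form n
| FImp : form n -> form n -> form n
| FK : agent n -> ThetaK -> form n -> form n
| FKv : agent n -> ThetaVplus -> term -> form n.

Arguments FProp {n}. Arguments FEq {n}. Arguments FNeg {n}.
Arguments FImp {n}. Arguments FK {n}. Arguments FKv {n}.

Definition FAnd {n} (a b : form n) : form n := FNeg (FImp a (FNeg b)).
Definition FIff {n} (a b : form n) : form n := FAnd (FImp a b) (FImp b a).

Record is_probability {W : Type} (mu : (W -> Prop) -> R) : Prop := {
  prob_nonneg : forall A, 0 <= mu A;
  prob_total : mu (fun _ => True) = 1;
  prob_sigma_additive : forall A : nat -> W -> Prop,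
    (forall m k, m <> k -> forall x, A m x -> A k x -> False) ->
    infinite_sum (fun k => mu (A k)) (mu (fun x => exists k, A k x))
}.

Record model (n : nat) : Type := {
  W : Type;
  W_nonempty : inhabited W;
  D : Type;
  D_nonempty : inhabited D;
  P : agent n -> W -> (W -> Prop) -> R;
  P_prob : forall i w, is_probability (P i w);
  V : W -> prop_var -> bool;
  val : W -> term -> D
}.

Arguments W {n}. Arguments D {n}. Arguments P {n}. Arguments V {n}. Arguments val {n}.

Fixpoint sat {n} (M : model n) (w : W M) (phi : form n) : Prop :=
  match phi with
  | FProp p => V M w p = true
  | FEq t s => val M w t = val M w s
  | FNeg a => ~ sat M w a
  | FImp a b => sat M w a -> sat M w b
  | FK i th a => P M i w (fun u => sat M u a) >= thK th
  | FKv i eta t => exists! d : D M, P M i w (fun u => val M u t = d) >= thV eta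
  end.

Definition valid {n} (phi : form n) : Prop :=
  forall (M : model n) (w : W M), sat M w phi.

Lemma one_in_ThetaK : (0 <= 1 <= 1)%Q.
Proof. split; discriminate. Qed.
Definition theta_one : ThetaK := exist _ 1%Q one_in_ThetaK.

(* Main.v *)
Require Import Defs.
From Stdlib Require Import Reals QArith Qreals.
From Stdlib Require Import Lra Lia FunctionalExtensionality PropExtensionality.
Open Scope R_scope.

Section Prob.
Context {Wt : Type} (mu : (Wt -> Prop) -> R) (Hmu : is_probability mu).

Lemma set_ext (A B : Wt -> Prop) : (forall x, A x <-> B x) -> mu A = mu B.
Proof.
  intro H. f_equal. apply functional_extensionality; intro x.
  apply propositional_extensionality; apply H.
Qed.

Lemma mu_empty : mu (fun _ => False) = 0.
Proof.
  pose proof (prob_sigma_additive _ Hmu (fun _ _ => False)) as H.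
  assert (Hd : forall m k : nat, m <> k -> forall x : Wt, False -> False -> False) by tauto.
  specialize (H Hd).
  assert (E : mu (fun x : Wt => exists k : nat, (fun _ _ => False) k x) = mu (fun _ => False))
    by (apply set_ext; intro x; split; [intros [_ []]| tauto]).
  cbv beta in H. rewrite E in H.
  set (c := mu (fun _ => False)) in *.
  pose proof (prob_nonneg _ Hmu (fun _ => False)) as Hc. fold c in Hc.
  destruct (Rle_lt_or_eq_dec 0 c Hc) as [Hp|Hp]; [|auto].
  exfalso. destruct (H (c/2)) as [N HN]; [lra|].
  pose proof (HN N (le_n _)) as H1. pose proof (HN (S N) (le_S _ _ (le_n _))) as H2.
  unfold R_dist in *. simpl sum_f_R0 in H2.
  set (S0 := sum_f_R0 (fun _ : nat => c) N) in *.
  apply Rabs_def2 in H1. apply Rabs_def2 in H2. lra.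
Qed.

Lemma mu_add (A B : Wt -> Prop) : (forall x, A x -> B x -> False) ->
  mu (fun x => A x \/ B x) = mu A + mu B.
Proof.
  intro Hd.
  set (F := fun k : nat => match k with O => A | S O => B | _ => fun _ => False end).
  pose proof (prob_sigma_additive _ Hmu F) as H.
  assert (Hd' : forall m k : nat, m <> k -> forall x : Wt, F m x -> F k x -> False).
  { intros [|[|m]] [|[|k]] Hne x; simpl; try tauto; try (intros; eauto); try lia. }
  specialize (H Hd').
  rewrite (set_ext (fun x => exists k, F k x) (fun x => A x \/ B x)) in H.
  2:{ intro x; split.
      - intros [[|[|k]] Hk]; simpl in Hk; tauto.
      - intros [Ha|Hb]; [exists 0%nat|exists 1%nat]; exact Ha || exact Hb. }
  assert (Hs : forall n, sum_f_R0 (fun k => mu (F k)) (S n) = mu A + mu B).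
  { induction n. simpl. reflexivity.
    simpl sum_f_R0 in *. rewrite IHn. simpl. rewrite mu_empty. ring. }
  apply (UL_sequence (fun n => sum_f_R0 (fun k => mu (F k)) n)).
  exact H.
  intros e He. exists 1%nat. intros m Hm. destruct m; [lia|].
  rewrite Hs. unfold R_dist. rewrite Rminus_diag, Rabs_R0. exact He.
Qed.

Lemma mu_le1 (A : Wt -> Prop) : mu A <= 1.
Proof.
  rewrite <- (prob_total _ Hmu).
  rewrite (set_ext (fun _ => True) (fun x => A x \/ ~ A x)) by (intro; tauto).
  rewrite mu_add by tauto. pose proof (prob_nonneg _ Hmu (fun x => ~ A x)). lra.
Qed.

Lemma mu_one_ext (A B C : Wt -> Prop) : mu A >= 1 ->
  (forall x, A x -> (B x <-> C x)) -> mu B = mu C.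
Proof.
  intros HA HBC.
  assert (Hn : mu (fun x => ~ A x) = 0).
  { pose proof (prob_total _ Hmu).
    rewrite (set_ext (fun _ => True) (fun x => A x \/ ~ A x)) in H by (intro; tauto).
    rewrite mu_add in H by tauto. pose proof (mu_le1 A).
    pose proof (prob_nonneg _ Hmu (fun x => ~ A x)). lra. }
  assert (Hsplit : forall X : Wt -> Prop, mu X = mu (fun x => X x /\ A x)).
  { intro X.
    rewrite (set_ext X (fun x => (X x /\ A x) \/ (X x /\ ~ A x))) by (intro; tauto).
    rewrite mu_add by tauto.
    assert (mu (fun x => X x /\ ~ A x) <= 0).
    { rewrite <- Hn.
      rewrite (set_ext (fun x => ~ A x) (fun x => (X x /\ ~ A x) \/ (~ X x /\ ~ A x))) by (intro; tauto).
      rewrite mu_add by tauto. pose proof (prob_nonneg _ Hmu (fun x => ~ X x /\ ~ A x)). lra. }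
    pose proof (prob_nonneg _ Hmu (fun x => X x /\ ~ A x)).
    assert (mu (fun x => X x /\ ~ A x) = 0) by lra. rewrite H1. ring. }
  rewrite (Hsplit B), (Hsplit C). apply set_ext. intro x. split; intros [h1 h2]; split; auto;
  apply (HBC x h2); auto.
Qed.
End Prob.

Lemma thK_one : thK theta_one = 1.
Proof. unfold thK, theta_one, Q2R. simpl. field. Qed.

Lemma sat_iff {n} (M : model n) w a b :
  (sat M w a <-> sat M w b) -> sat M w (FIff a b).
Proof. simpl. tauto. Qed.

Theorem proposition7 (n : nat) (i : agent n) (t s u : term)
  (theta : ThetaK) (eta : ThetaVplus) :
  valid (FImp (FK i theta_one (FEq t s))
              (FIff (FK i theta (FEq t u)) (FK i theta (FEq s u))))
  /\
  valid (FImp (FK i theta_one (FEq t s))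
              (FIff (FKv i eta t) (FKv i eta s))).
Proof.
  split; intros M w H; apply sat_iff; simpl in H |- *; rewrite thK_one in H;
  pose proof (P_prob _ M i w) as Hp.
  - rewrite (mu_one_ext _ Hp _ (fun x => val M x t = val M x u) (fun x => val M x s = val M x u) H).
    tauto. intros x Hx; rewrite Hx; tauto.
  - assert (E : forall d, P M i w (fun x => val M x t = d) = P M i w (fun x => val M x s = d)).
    { intro d. apply (mu_one_ext _ Hp _ _ _ H). intros x Hx; rewrite Hx; tauto. }
    split; intros [d [Hd Hu]]; exists d; split.
    + rewrite <- E; exact Hd.
    + intros d' Hd'; apply Hu; rewrite E; exact Hd'.
    + rewrite E; exact Hd.
    + intros d' Hd'; apply Hu; rewrite <- E; exact Hd'.
Qed.
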